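(* Assume the structural equation model below, a budget constraint with $\gamma_g^*\in\Gamma(\tau,b)$, and the no-measurement-error (NOME) assumption that $\beta_\Phi^*$ is known exactly. Let $\hat\beta_y=\widehat{\mathrm{Cov}}(Y,Z)$ be computed from $n$ i.i.d. samples of $P(X,Y,Z)$, and assume each $(\hat\beta_y)_i$ has finite variance so that $\sqrt n((\hat\beta_y)_i-(\beta_y^* )_i)/\mathrm{Se}_i\to\mathcal{N}(0,1)$ in distribution, with $\mathrm{Se}_i$ consistently estimated by a plug-in $\widehat{\mathrm{Se}}_i$. Fix $\alpha\in(0,1)$ and let $(\delta\beta_y)_i=z_{1-\alpha/(2d_Z)}\widehat{\mathrm{Se}}_i/\sqrt n$ be the half-width of the normal-approximation $(1-\alpha/d_Z)\times100\%$ confidence interval for $(\beta_y)_i$ centered at $(\hat\beta_y)_i$ ($z_p$ the standard normal $p$-quantile). For each maximal assignment $\tilde U$ let $\hat\Gamma_{\tilde U}=\{\gamma\in\mathbb{R}^{d_Z}:|\gamma_i|\le\tau_{\tilde U_i}+(\delta\beta_y)_i\ \forall i\}$ and $\hat\Gamma_\alpha=\bigcup_{\tilde U\in\Sigma_b^{(\max)}}\hat\Gamma_{\tilde U}$. With $$\hat{\mathcal{T}}_\alpha=\{\theta\in\mathbb{R}^{d_\Phi}:\hat\beta_y-\theta\cdot\beta_\Phi^*\in\hat\Gamma_\alpha\},$$ we have, as $n\to\infty$, $P(\theta^*\in\hat{\mathcal{T}}_\alpha)\ge 1-\alpha$ asymptotically.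
   Context: Model: $Z:=f_z(\epsilon_z)$, $X:=f_x(Z,\epsilon_x)$, $Y:=\theta^*\cdot\Phi(X)+g_y(Z,\epsilon_y)$, $Z\in\mathbb{R}^{d_Z}$, known $\Phi:\Omega_X\to\mathbb{R}^{d_\Phi}$, $d_\Phi\le d_Z$. $\beta_\Phi^*=\mathrm{Cov}(\Phi(X),Z)$ ($d_\Phi\times d_Z$, columns $(\beta_\Phi^* )_i$), $\beta_y^*=\mathrm{Cov}(Y,Z)$, $\gamma_g^*=\mathrm{Cov}(g_y(Z,\epsilon_y),Z)=\beta_y^*-\theta^*\cdot\beta_\Phi^*$, with $\theta\cdot\beta_\Phi$ the vector of components $\theta\cdot(\beta_\Phi)_i$. Budget constraints: thresholds $0\le\tau_1<\dots<\tau_K<\infty$ and integer budgets $0<b_1<\dots<b_K\le d_Z$, $K\le d_Z$. $\Gamma(\tau,b)=\{\gamma\in\mathbb{R}^{d_Z}:\ \#\{i:|\gamma_i|\le\tau_\ell\}\ge b_\ell\text{ for all }\ell\in[K]\}$. Set $b_0=0$, $b_{K+1}=d_Z$, $\tau_{K+1}=+\infty$. The set $\Sigma_b^{(\max)}$ of maximal assignments consists of all $\tilde U\in\{1,\dots,K+1\}^{d_Z}$ having exactly $b_\ell-b_{\ell-1}$ components equal to $\ell$ for each $\ell\in\{1,\dots,K+1\}$; for such $\tilde U$, $\tau_{\tilde U_i}$ denotes the threshold indexed by $\tilde U_i$. Then $\Gamma(\tau,b)=\bigcup_{\tilde U\in\Sigma_b^{(\max)}}\{\gamma:|\gamma_i|\le\tau_{\tilde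 U_i}\ \forall i\}$. *)

(* Defs.v *)
From HB Require Import structures.
From mathcomp Require Import all_boot all_order all_algebra.
From mathcomp Require Import all_classical all_reals all_analysis.
Unset Strict Implicit.
Unset Printing Implicit Defensive.
Import Order.TTheory GRing.Theory Num.Theory.
Import numFieldNormedType.Exports.
Local Open Scope classical_set_scope.
Local Open Scope ring_scope.

Definition std_normal_cdf {R : realType} (x : R) : R :=
  fine (normal_prob 0 1 `]-oo, x]).

(* Budget parameters: thresholds tau_1..tau_K and budgets b_1..b_K are
   given as functions on nat; only the indices 1..K are meaningful. *)

Definition tau_ext {R : realType} (K : nat) (tau : nat -> R) (l : nat) : \bar R :=
  if (l <= K)%N then (tau l)%:E else +oo%E.

Definition b_ext (dZ K : nat) (b : nat -> nat) (l : nat) : nat :=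
  if l == 0%N then 0%N else if (l <= K)%N then b l else dZ.

Definition Gamma_budget {R : realType} (dZ K : nat) (tau : nat -> R)
    (b : nat -> nat) : set 'rV[R]_dZ :=
  [set g : 'rV[R]_dZ | forall l : nat, (1 <= l <= K)%N ->
     (b l <= #|[set i : 'I_dZ | (`|g ord0 i| <= tau l)%R]|)%N].

Definition max_assignments (dZ K : nat) (b : nat -> nat) : set ('I_dZ -> nat) :=
  [set U : 'I_dZ -> nat | (forall i, 1 <= U i <= K.+1)%N /\
           (forall l : nat, (1 <= l <= K.+1)%N ->
              #|[set i : 'I_dZ | U i == l]| = (b_ext dZ K b l - b_ext dZ K b l.-1)%N)].

Definition Gamma_hat_U {R : realType} (dZ K : nat) (tau : nat -> R)
    (delta : 'I_dZ -> R) (U : 'I_dZ -> nat) : set 'rV[R]_dZ :=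
  [set g : 'rV[R]_dZ | forall i : 'I_dZ,
     (`|g ord0 i|%:E <= tau_ext K tau (U i) + (delta i)%:E)%E].

Definition Gamma_hat {R : realType} (dZ K : nat) (tau : nat -> R) (b : nat -> nat)
    (delta : 'I_dZ -> R) : set 'rV[R]_dZ :=
  \bigcup_(U in max_assignments dZ K b) Gamma_hat_U dZ K tau delta U.

Definition T_hat {R : realType} (dZ dPhi K : nat) (tau : nat -> R) (b : nat -> nat)
    (delta : 'I_dZ -> R) (betay_hat : 'rV[R]_dZ) (betaPhi : 'M[R]_(dPhi, dZ))
    : set 'rV[R]_dPhi :=
  [set th : 'rV[R]_dPhi | betay_hat - th *m betaPhi \in Gamma_hat dZ K tau b delta].

(* Main.v *)
Require Import Defs.
From HB Require Import structures.
From mathcomp Require Import all_boot all_order all_algebra.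
From mathcomp Require Import all_classical all_reals all_analysis.
From mathcomp Require Import measurable_realfun.
From mathcomp Require Import ring lra zify.
Import Order.TTheory GRing.Theory Num.Theory.
Import numFieldNormedType.Exports.
Local Open Scope classical_set_scope.
Local Open Scope ring_scope.
Section NormalFacts.
Context {R : realType}.
Local Notation N := (@normal_prob R 0 1).
Local Notation mu := lebesgue_measure.
Local Open Scope ereal_scope.

Lemma N_le_peak (A : set R) : measurable A ->
  N A <= (normal_peak (1:R))%:E * mu A.
Proof.
move=> mA; rewrite /normal_prob.
apply: (@le_trans _ _ (\int[mu]_(x in A) (normal_peak (1:R))%:E)); last first.
  by rewrite integral_cst.
apply: ge0_le_integral => //=.
- by move=> x _; rewrite lee_fin normal_pdf_ge0.
- apply/measurable_EFinP. move=> mA2 B mB. have := measurable_normal_pdf (0:R) 1 measurableT mB. rewrite setTI. move=> h. exact: measurableI.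
- by move=> x _; rewrite lee_fin normal_pdf_ub// oner_neq0.
Qed.

Lemma N_fin (A : set R) : measurable A -> N A \is a fin_num.
Proof. by move=> mA; apply: fin_num_measure. Qed.

Lemma N_set1 (x : R) : N [set x] = 0.
Proof.
apply/eqP; rewrite eq_le measure_ge0 andbT.
have := @N_le_peak [set x] (measurable_set1 x).
by rewrite lebesgue_measure_set1 mule0.
Qed.

Lemma N_sym (x : R) : N `]-oo, (- x)%R] = N `[x, +oo[.
Proof.
rewrite /normal_prob ge0_integration_by_substitutionNy.
- by apply: eq_integral => t _ /=; rewrite /normal_pdf /= oner_eq0 /normal_fun !subr0 sqrrN.
- apply: continuous_subspaceT => t; apply: continuous_normal_pdf; exact: oner_neq0.
- by move=> t _; apply: normal_pdf_ge0.
Qed.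

Lemma N_split (x y : R) : (x <= y)%R ->
  N `]-oo, y] = N `]-oo, x] + N `]x, y].
Proof.
move=> xy.
rewrite (@itv_bndbnd_setU _ _ -oo%O (BRight x) (BRight y)) //.
rewrite measureU //.
apply/seteqP; split => t //=; rewrite !in_itv/= => -[h1 /andP[h2 _]].
by move: (lt_le_trans h2 h1); rewrite ltxx.
Qed.

Lemma N_compl (x : R) : N `]-oo, x[ + N `[x, +oo[ = 1.
Proof.
rewrite -measureU //; first (rewrite itv_setU_setT; exact: probability_setT).
rewrite -subset0 => t /=; rewrite !in_itv/= andbT => -[h1 h2].
by move: (lt_le_trans h1 h2); rewrite ltxx.
Qed.

Lemma N_open_closed (x : R) : N `]-oo, x] = N `]-oo, x[.
Proof.
rewrite -(@setUitv1 _ _ -oo%O x true) //.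
rewrite measureU //.
  by rewrite (_ : _ [set x] = 0) ?adde0 //; exact: N_set1.
rewrite -subset0 => t /=; rewrite !in_itv/= => -[h1 h2]; move: h1; rewrite h2 ltxx; done.
Qed.
End NormalFacts.

Section PhiFacts.
Context {R : realType}.
Local Notation Phi := (@std_normal_cdf R).
Local Notation N := (@normal_prob R 0 1).

Lemma PhiE (x : R) : (Phi x)%:E = N `]-oo, x].
Proof. by rewrite /std_normal_cdf fineK // N_fin. Qed.

Lemma Phi_sym (x : R) : Phi (- x) = 1 - Phi x.
Proof.
have h := N_compl x.
rewrite -N_open_closed -N_sym -!PhiE -EFinD in h.
case: h => h; rewrite -h; lra.
Qed.

Lemma Phi_split (x y : R) : x <= y ->
  (Phi y)%:E = (Phi x)%:E + N `]x, y].
Proof. by move=> xy; rewrite !PhiE (@N_split _ x y xy). Qed.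

Lemma Phi_mono (x y : R) : x <= y -> Phi x <= Phi y.
Proof.
move=> xy; rewrite -lee_fin (Phi_split _ _ xy).
by rewrite leeDl // measure_ge0.
Qed.

Lemma Phi_lip (x y : R) : x <= y -> Phi y - Phi x <= normal_peak (1:R) * (y - x).
Proof.
move=> xy.
have hf := @N_fin R `]x, y] (measurable_itv _).
set r := fine (N `]x, y]).
have e : N `]x, y] = r%:E by rewrite /r fineK.
have h2 : (Phi y)%:E = (Phi x + r)%:E by rewrite EFinD -e; exact: Phi_split.
have h1 : (r%:E <= (normal_peak (1:R))%:E * lebesgue_measure `]x, y])%E.
  by rewrite -e; exact: N_le_peak.
case: h2 => ->.
move: h1; rewrite lebesgue_measure_itv /= lte_fin.
case: ltgtP xy => // [xy _|-> _].
  rewrite -EFinD -EFinM lee_fin => h1; lra.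
rewrite mule0 lee_fin => h1; rewrite subrr mulr0; lra.
Qed.

Lemma Phi0 : Phi 0 = 2^-1.
Proof. have := Phi_sym 0; rewrite oppr0 => h; lra. Qed.

Lemma Phi_le1 (x : R) : Phi x <= 1.
Proof. by rewrite -lee_fin PhiE probability_le1. Qed.
End PhiFacts.

Section Comb.
Local Open Scope set_scope.
Local Open Scope nat_scope.

Lemma card_lt_ord (m k : nat) : k <= m -> #|[set j : 'I_m | j < k]| = k.
Proof.
move=> km.
have -> : [set j : 'I_m | j < k] = widen_ord km @: [set: 'I_k].
  apply/finset.setP => j; rewrite inE; apply/idP/imsetP.
    by move=> jk; exists (Ordinal jk) => //; apply: val_inj.
  by case=> j' _ ->; rewrite /= ltn_ord.
by rewrite card_imset ?cardsT ?card_ord //; by move=> x y /(congr1 val) /= /val_inj.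
Qed.

Variable R : realType.
Variable m : nat.
Variable a : 'I_m -> R.

Definition prec (x i : 'I_m) : bool :=
  ((a x < a i)%R) || ((a x == a i) && (x < i)).
Definition rank (i : 'I_m) : nat := #|[set x | prec x i]|.

Lemma prec_irr i : ~~ prec i i.
Proof. by rewrite /prec ltxx ltnn andbF. Qed.

Lemma prec_trans x y i : prec x y -> prec y i -> prec x i.
Proof.
rewrite /prec => /orP[h1|/andP[/eqP e1 h1]] /orP[h2|/andP[/eqP e2 h2]].
- by rewrite (lt_trans h1 h2).
- by rewrite -e2 h1.
- by rewrite e1 h2.
- by rewrite e1 e2 eqxx (ltn_trans h1 h2) orbT.
Qed.

Lemma prec_total x i : x != i -> prec x i || prec i x.
Proof.
move=> xi; rewrite /prec; case: (ltgtP (a x) (a i)) => //= e.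
case: (ltngtP x i) => // /val_inj e2.
by rewrite e2 eqxx in xi.
Qed.

Lemma rank_lt_prec x i : prec x i -> rank x < rank i.
Proof.
move=> h; apply: proper_card; apply/properP; split.
  by apply/fintype.subsetP => y; rewrite !inE => hy; exact: prec_trans hy h.
by exists x; rewrite !inE // (negbTE (prec_irr x)).
Qed.

Lemma rank_inj : injective rank.
Proof.
move=> x i e; apply/eqP; apply/negPn/negP => xi.
case/orP: (prec_total _ _ xi) => /rank_lt_prec; rewrite e ltnn //.
Qed.

Lemma rank_lt i : rank i < m.
Proof.
rewrite -[X in _ < X](card_ord m) -cardsT; apply: proper_card; apply/properP; split.
  exact: finset.subsetT.
by exists i; rewrite !inE // (negbTE (prec_irr i)).
Qed.

Definition rk (i : 'I_m) : 'I_m := Ordinal (rank_lt i).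

Lemma rk_inj : injective rk.
Proof. by move=> x y /(congr1 val) /= /rank_inj. Qed.

Lemma card_rank_lt k : k <= m -> #|[set i | rank i < k]| = k.
Proof.
move=> km; rewrite -[RHS](@card_lt_ord m k km).
have [rkinv h1 h2] := injF_bij rk_inj.
rewrite -(card_imset _ rk_inj); apply: eq_card => j; rewrite inE.
apply/finset.imsetP/idP.
  by case=> i; rewrite inE => hi ->.
move=> jk; exists (rkinv j); last by rewrite h2.
by rewrite inE -[rank _]/(nat_of_ord (rk (rkinv j))) h2.
Qed.

Lemma rank_ge (t : R) (i : 'I_m) : (t < a i)%R ->
  #|[set x | (a x <= t)%R]| <= rank i.
Proof.
move=> ti; apply: subset_leq_card; apply/fintype.subsetP => x; rewrite !inE => hx.
by rewrite /prec (le_lt_trans hx ti).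
Qed.
End Comb.
Arguments rank {R m} a i.
Arguments rank_lt {R m} a i.
Arguments card_rank_lt {R m} a {k}.

Section Level.
Local Open Scope set_scope.
Local Open Scope nat_scope.
Variables (K : nat) (b : nat -> nat).
Hypothesis hb : forall l : nat, 1 <= l < K -> b l < b l.+1.

Lemma bmono l l' : 1 <= l -> l <= l' -> l' <= K -> b l <= b l'.
Proof.
move=> h1; elim: l' => [|l' IH]; first by rewrite leqn0 => /eqP ->; lia.
rewrite leq_eqVlt => /orP[/eqP -> //|hl] hK.
have := IH hl (ltnW hK); have := hb l'; lia.
Qed.

Definition cnt (j : nat) : nat := \sum_(1 <= l < K.+1) (b l <= j : nat).

Lemma cnt_le j : cnt j <= K.
Proof.
rewrite /cnt; apply: (@leq_trans (\sum_(1 <= l < K.+1) 1)).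
  by apply: leq_sum => l _; case: (b l <= j).
by rewrite sum_nat_const_nat; lia.
Qed.

Lemma cnt_ge l j : 1 <= l <= K -> (l <= cnt j) = (b l <= j).
Proof.
move=> /andP[l1 lK]; have e1 : 1 <= l.+1 by [].
have e2 : l.+1 <= K.+1 by [].
rewrite /cnt (@big_cat_nat _ _ _ l.+1 1 K.+1 _ _ e1 e2) /=.
case: (leqP (b l) j) => hbl.
  apply: leq_trans (leq_addr _ _).
  rewrite big_nat_cond (eq_bigr (fun=> 1)); last first.
    move=> i /andP[/andP[i1 il] _]; rewrite (@leq_trans (b l)) //.
    by apply: bmono => //; lia.
  by rewrite -big_nat_cond sum_nat_const_nat; lia.
have S2 : \sum_(l.+1 <= i < K.+1) (b i <= j : nat) = 0.
  rewrite big_nat_cond big1 // => i /andP[/andP[i1 iK] _].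
  have : b l <= b i by apply: bmono; lia.
  by move=> h; rewrite leqNgt (leq_trans hbl h).
have S1 : \sum_(1 <= i < l) (b i <= j : nat) <= l - 1.
  apply: (@leq_trans (\sum_(1 <= i < l) 1)).
    by apply: leq_sum => i _; case: (b i <= j).
  by rewrite sum_nat_const_nat; lia.
rewrite S2 (big_nat_recr _ _ _ l1) /= leqNgt (ltn_geF hbl) /=.
apply/negbTE; rewrite -ltnNge; lia.
Qed.
End Level.
Lemma card_cset (T : finType) (P : pred T) :
  #|[set x : T | P x]%classic| = #|[set x | P x]%SET|.
Proof.
apply: eq_card => x; rewrite inE; apply/idP/idP => [/set_mem //|h].
exact: mem_set.
Qed.

Section Assign.
Local Open Scope set_scope.
Local Open Scope nat_scope.
Variables (R : realType) (m K : nat) (tau : nat -> R) (b : nat -> nat).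
Hypothesis hb : forall l : nat, 1 <= l < K -> b l < b l.+1.
Hypothesis hbK : b K <= m.
Hypothesis hK : 0 < K.
Let bm := @bmono K b hb.

Lemma bext_mono l : 1 <= l <= K.+1 ->
  b_ext m K b l.-1 <= b_ext m K b l <= m.
Proof.
move=> /andP[l1 lK]; rewrite /b_ext.
have bK l' : 1 <= l' <= K -> b l' <= m.
  by move=> /andP[h1 h2]; apply: leq_trans hbK; exact: (bm l' K h1 h2 (leqnn K)).
case: (leqP l K) => hl; last first.
  have -> : l = K.+1 by lia.
  by rewrite /= (gtn_eqF hK) ?ltnn ?leqnn ?hbK ?leqnn.
rewrite (gtn_eqF l1) bK ?hl ?l1 // andbT.
case: (l.-1 =P 0) => // /eqP h.
have -> : l.-1 <= K by lia.
apply: bm; lia.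
Qed.

Lemma cnt_bext l j : j < m -> l <= K.+1 -> (l <= cnt K b j) = (b_ext m K b l <= j).
Proof.
move=> jm lK; rewrite /b_ext; case: l lK => [|l] lK //=.
case: (leqP l.+1 K) => h.
  by rewrite (@cnt_ge K b hb) //; lia.
have := cnt_le K b j; rewrite leqNgt; case: ltnP => //; lia.
Qed.

Lemma exists_assign (g : 'rV[R]_m) :
  Gamma_budget m K tau b g ->
  exists U, max_assignments m K b U /\
    forall i, (`|g ord0 i|%:E <= tau_ext K tau (U i))%E.
Proof.
move=> hg.
pose a : 'I_m -> R := fun i => `|g ord0 i|%R.
pose U (i : 'I_m) := (cnt K b (rank a i)).+1.
have Ul i : U i <= K.+1 by rewrite /U ltnS cnt_le.
have key i l : 1 <= l <= K.+1 -> (U i == l) =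
   (b_ext m K b l.-1 <= rank a i) && (rank a i < b_ext m K b l).
  move=> /andP[l1 lK]; have rm := rank_lt a i.
  have lK' : l.-1 <= K.+1 by lia.
  rewrite -(cnt_bext (l.-1) (rank a i) rm lK').
  rewrite ltnNge -(cnt_bext l (rank a i) rm lK) /U.
  by apply/eqP/andP => [<-|[h1 h2]]; lia.
exists U; split; first split.
- by move=> i; apply/andP; split => //; exact: Ul.
- move=> l /[dup] hl /andP[l1 lK].
  rewrite card_cset.
  have /andP[lo hi] := bext_mono l hl.
  set lo' := b_ext m K b l.-1 in lo *; set hi' := b_ext m K b l in lo hi *.
  rewrite -(card_rank_lt a hi) -(card_rank_lt a (leq_trans lo hi)).
  rewrite -(cardsID [set i | rank a i < lo'] [set i | rank a i < hi']).
  have -> : #|[set i | rank a i < hi'] :&: [set i | rank a i < lo']| =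
            #|[set i | rank a i < lo']|.
    apply: eq_card => i; rewrite !inE; case: (ltnP (rank a i) lo') => h.
      by rewrite andbT (leq_trans h lo).
    by rewrite andbF.
  rewrite addKn; apply: eq_card => i; rewrite !inE key // -leqNgt andbC.
  by [].
- move=> i; rewrite /tau_ext.
  case: leqP => UK; try exact: leey.
  rewrite lee_fin leNgt; apply/negP => ht.
  have h1 := @rank_ge R m a (tau (U i)) i ht.
  have h2 := hg (U i) (introT andP (conj (isT : 0 < U i) UK)).
  have := key i (U i) (introT andP (conj (isT : 0 < U i) (Ul i))).
  rewrite eqxx /b_ext UK (gtn_eqF (isT : 0 < U i)) => /esym /andP[_ h3].
  move: h2; rewrite card_cset => h2.
  have : #|[set x | (`|g ord0 x| <= tau (U i))%R]| <= rank a i by exact: h1.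
  lia.
Qed.
End Assign.
Section ProbHelpers.
Context {R : realType} {d : measure_display} {Omega : measurableType d}
  (P : probability Omega R).

Lemma meas_le (f g : Omega -> R) : measurable_fun setT f ->
  measurable_fun setT g -> measurable [set w | f w <= g w].
Proof. by move=> mf mg; rewrite -[X in measurable X]setTI; exact: measurable_fun_le. Qed.

Lemma meas_lt (f g : Omega -> R) : measurable_fun setT f ->
  measurable_fun setT g -> measurable [set w | f w < g w].
Proof.
move=> mf mg.
have -> : [set w | f w < g w] = ~` [set w | g w <= f w].
  by apply/seteqP; split => w /=; rewrite ltNge => /negP.
exact/measurableC/meas_le.
Qed.

Lemma union_bound (m : nat) (B : 'I_m -> set Omega) :
  (forall i, measurable (B i)) ->
  (P (\bigcup_i B i) <= \sum_(i < m) P (B i))%E.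
Proof.
move=> mB.
pose F (k : nat) := if insub k is Some i then B i else set0.
have -> : (\sum_(i < m) P (B i) = \sum_(i < m) P (F i))%E.
  by apply: eq_bigr => i _; rewrite /F valK.
apply: (@content_subadditive _ _ _ P).
- move=> k _; rewrite /F; case: insubP => //= i _ _; exact: mB.
- by apply: fin_bigcup_measurable => //; exact: finite_finset.
- move=> w [i _ Bw]; rewrite -bigcup_mkord; exists (val i) => //=.
  by rewrite /F valK.
Qed.

Lemma inter_lb (m : nat) (A : 'I_m -> set Omega) (r : R) :
  (forall i, measurable (A i)) -> (forall i, (P (~` A i) <= r%:E)%E) ->
  ((1 - m%:R * r)%:E <= P (\bigcap_i A i))%E.
Proof.
move=> mA hA.
have mI : measurable (\bigcap_i A i).
  by apply: fin_bigcap_measurable => //; exact: finite_finset.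
have hu : (P (~` \bigcap_i A i) <= (m%:R * r)%:E)%E.
  rewrite setC_bigcap.
  apply: le_trans (@union_bound m (fun i => ~` A i) (fun i => measurableC (mA i))) _.
  have hs : (\sum_(i < m) P (~` A i) <= \sum_(i < m) r%:E)%E.
    by apply: lee_sum => i _; exact: hA.
  apply: le_trans hs _.
  by rewrite sumEFin big_const_ord iter_addr addr0 mulr_natl.
move: hu; rewrite probability_setC //.
have hf := fin_num_measure P _ mI.
rewrite -(fineK hf) -EFinB !lee_fin => h; lra.
Qed.

Lemma ev_ub (u : nat -> \bar R) (l e : R) : u @ \oo --> l%:E -> 0 < e ->
  \forall n \near \oo, (u n <= (l + e)%:E)%E.
Proof.
move=> /fine_cvgP [hfin hc] e0.
have h := cvgr_le l hc (l + e) (_ : l < l + e); rewrite ?ltrDl // in h.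
near=> n; have fn : u n \is a fin_num by near: n.
rewrite -(fineK fn) lee_fin; near: n; exact: h.
Unshelve. all: end_near.
Qed.

Lemma ev_lb (u : nat -> \bar R) (l e : R) : u @ \oo --> l%:E -> 0 < e ->
  \forall n \near \oo, ((l - e)%:E <= u n)%E.
Proof.
move=> /fine_cvgP [hfin hc] e0.
have h := cvgr_ge l hc (l - e) (_ : l - e < l); rewrite ?ltrBlDr ?ltrDl // in h.
near=> n; have fn : u n \is a fin_num by near: n.
rewrite -(fineK fn) lee_fin; near: n; exact: h.
Unshelve. all: end_near.
Qed.
End ProbHelpers.

Theorem theorem4
  (R : realType) (dZ dPhi K : nat)
  (tau : nat -> R) (b : nat -> nat)
  (* budget constraint parameters *)
  (hK : (0 < K <= dZ)%N)
  (htau0 : 0 <= tau 1%N)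
  (htau : forall l : nat, (1 <= l < K)%N -> tau l < tau l.+1)
  (hb0 : (0 < b 1%N)%N)
  (hb : forall l : nat, (1 <= l < K)%N -> (b l < b l.+1)%N)
  (hbK : (b K <= dZ)%N)
  (hdPhi : (dPhi <= dZ)%N)
  (* population quantities: theta*, beta_Phi* (known exactly, NOME), beta_y* *)
  (theta : 'rV[R]_dPhi) (betaPhi : 'M[R]_(dPhi, dZ)) (betay : 'rV[R]_dZ)
  (* budget constraint on gamma_g* = beta_y* - theta* . beta_Phi* *)
  (hgamma : Gamma_budget dZ K tau b (betay - theta *m betaPhi))
  (* probability space carrying the samples; for each n, the estimators
     computed from the n samples *)
  (d : measure_display) (Omega : measurableType d) (P : probability Omega R)
  (betay_hat : nat -> 'I_dZ -> ({RV P >-> R}))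
  (Se : 'I_dZ -> R) (hSe : forall i, 0 < Se i)
  (Se_hat : nat -> 'I_dZ -> ({RV P >-> R}))
  (* asymptotic normality: sqrt n ((hat beta_y)_i - (beta_y^star)_i) / Se_i -> N(0,1)
     in distribution *)
  (hclt : forall (i : 'I_dZ) (x : R),
     P [set w | Num.sqrt (n%:R) * (betay_hat n i w - betay ord0 i) / Se i <= x]
       @[n --> \oo] --> (std_normal_cdf x)%:E)
  (* consistency of the plug-in standard error *)
  (hcons : forall (i : 'I_dZ) (eps : R), 0 < eps ->
     P [set w | eps < `|Se_hat n i w - Se i|] @[n --> \oo] --> 0%E)
  (alpha : R) (halpha : 0 < alpha < 1)
  (* z = z_{1 - alpha/(2 dZ)}, the standard normal quantile *)
  (z : R) (hz : std_normal_cdf z = 1 - alpha / (2 * dZ%:R)) :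
  (* P(theta* in hat T_alpha) >= 1 - alpha asymptotically, i.e.
     liminf_n P(theta* in hat T_alpha) >= 1 - alpha *)
  forall eps : R, 0 < eps -> \forall n \near \oo,
    ((1 - alpha - eps)%:E <=
     P [set w | theta \in
        T_hat dZ dPhi K tau b (fun i => (z * Se_hat n i w / Num.sqrt (n%:R))%R)
              (\row_i betay_hat n i w)%R betaPhi])%E.
Proof.

move=> eps heps.
have hK0 : (0 < K)%N by case/andP: hK.
have m0 : (0 < dZ)%N by case/andP: hK => h1 h2; apply: leq_trans h2.
have [U0 [hU0 hU0b]] := @exists_assign R dZ K tau b hb hbK hK0 _ hgamma.
set mR : R := dZ%:R.
have mR0 : 0 < mR by rewrite /mR ltr0n.
set c := alpha / (2 * mR).
have c0 : 0 < c by rewrite /c divr_gt0 // ?mulr_gt0 //; case/andP: halpha.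
have c_lt : c < 2^-1.
  rewrite /c ltr_pdivrMr ?mulr_gt0 //.
  have : 1 <= mR by rewrite /mR ler1n.
  case/andP: halpha => a0 a1 h1; nra.
have z0 : 0 < z.
  rewrite ltNge; apply/negP => hz0.
  have := Phi_mono _ _ hz0; rewrite Phi0 hz -/c; lra.
set pk := normal_peak (1:R).
have pk0 : 0 <= pk := normal_peak_ge0 _.
set del := eps / (8 * mR).
have del0 : 0 < del by rewrite /del divr_gt0 // mulr_gt0.
set eta := Num.min (del / (pk + 1)) (z / 2).
have eta0 : 0 < eta by rewrite /eta lt_min divr_gt0 ?divr_gt0 //; lra.
have etaz : eta <= z / 2 by rewrite /eta ge_min lexx orbT.
have etapk : pk * eta <= del.
  have : eta <= del / (pk + 1) by rewrite /eta ge_min lexx.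
  rewrite ler_pdivlMr; last lra.
  move=> h; nra.
set z' := z - eta.
have z'0 : 0 < z' by rewrite /z'; lra.
have Phiz' : 1 - c - del <= std_normal_cdf z'.
  have hzz : z' <= z by rewrite /z'; lra.
  have := Phi_lip z' z hzz; rewrite hz -/c.
  have -> : z - z' = eta by rewrite /z'; ring.
  rewrite -/pk => h; lra.
have PhiN := Phi_sym z'.
set r := 2 * c + 5 * del.
pose A n i := [set w | `|betay_hat n i w - betay ord0 i| <= z * Se_hat n i w / Num.sqrt (n%:R)].
have mA : forall n i, measurable (A n i).
  move=> n i; rewrite /A; apply: meas_le.
    by apply: measurableT_comp => //; apply: measurable_funB.
  by apply: measurable_funM => //; apply: measurable_funM.
have key : forall i : 'I_dZ, \forall n \near \oo, (P (~` A n i) <= r%:E)%E.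
  move=> i.
  have s0 := hSe i.
  pose T n w := Num.sqrt (n%:R) * (betay_hat n i w - betay ord0 i) / Se i.
  pose e0 := Se i * eta / z.
  have e00 : 0 < e0 by rewrite /e0 divr_gt0 // mulr_gt0.
  have h1 := ev_lb _ _ _ (hclt i z') del0.
  have h2 := ev_ub _ _ _ (hclt i (- z')) del0.
  have h3 := ev_ub _ _ _ (hcons i e0 e00) del0.
  near=> n.
  have n1 : (1 <= n)%N by near: n; exact: nbhs_infty_ge.
  have sq0 : 0 < Num.sqrt (n%:R : R) by rewrite sqrtr_gt0 ltr0n.
  have mT1 : forall x, measurable [set w | T n w <= x].
    move=> x; apply: meas_le => //.
    by apply: measurable_funM => //; apply: measurable_funM => //; apply: measurable_funB.
  have mC3 : measurable [set w | e0 < `|Se_hat n i w - Se i|].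
    apply: meas_lt => //.
    by apply: measurableT_comp => //; apply: measurable_funB.
  have hb1 : ((std_normal_cdf z' - del)%:E <= P [set w | (T n w <= z')%R])%E.
    by near: n; exact: h1.
  have hb2 : (P [set w | (T n w <= - z')%R] <= (std_normal_cdf (- z') + del)%:E)%E.
    by near: n; exact: h2.
  have hb3 : (P [set w | (e0 < `|Se_hat n i w - Se i|)%R] <= (0 + del)%:E)%E.
    by near: n; exact: h3.
  have hsub : ~` A n i `<=` (~` [set w | T n w <= z'] `|` [set w | T n w <= - z'])
      `|` [set w | e0 < `|Se_hat n i w - Se i|].
    move=> w /= hnA.
    case: (boolP (T n w <= z')) => hw1; last by left; left; apply/negP.
    case: (boolP (T n w <= - z')) => hw2; first by left; right.
    case: (boolP (e0 < `|Se_hat n i w - Se i|)) => hw3; first by right.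
    exfalso; apply: hnA.
    rewrite -ltNge in hw2; rewrite -leNgt in hw3.
    rewrite /A /= ler_pdivlMr //.
    move: hw1 hw2; rewrite /T.
    set X := betay_hat n i w - betay ord0 i.
    set S := Se_hat n i w.
    set sq := Num.sqrt (n%:R : R).
    rewrite ler_pdivrMr // ltr_pdivlMr // => hw1 hw2.
    have hy : `|sq * X| <= z' * Se i.
      rewrite ler_norml; apply/andP; split; lra.
    have hnorm : `|X| * sq = `|sq * X| by rewrite normrM (ger0_norm (ltW sq0)) mulrC.
    have hS : Se i - e0 <= S.
      move: hw3; rewrite ler_norml => /andP[h _]; rewrite /S; lra.
    have ze : z * e0 = Se i * eta by rewrite /e0; field; rewrite gt_eqF.
    have hzS : z * (Se i - e0) <= z * S by rewrite ler_pM2l.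
    rewrite hnorm; apply: le_trans hy _.
    rewrite /z'; move: hzS; rewrite mulrBr ze; lra.
  have hU : (P (~` A n i) <= P (~` [set w | (T n w <= z')%R]) + P [set w | (T n w <= - z')%R]
      + P [set w | (e0 < `|Se_hat n i w - Se i|)%R])%E.
    apply: le_trans (le_measure _ _ _ hsub) _; rewrite ?inE.
    - by apply: measurableC.
    - by apply: measurableU => //; apply: measurableU => //; apply: measurableC.
    - apply: le_trans (measureU2 _ _ _) _ => //.
        by apply: measurableU => //; apply: measurableC.
      by apply: leeD2r; apply: measureU2 => //; apply: measurableC.
  rewrite (@probability_setC _ _ _ P _ (mT1 z')) in hU.
  have f0 := fin_num_measure P _ (measurableC (mA n i)).
  have f1 := fin_num_measure P _ (mT1 z').
  have f2 := fin_num_measure P _ (mT1 (- z')).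
  have f3 := fin_num_measure P _ mC3.
  move: hU hb1 hb2 hb3.
  rewrite -(fineK f0) -(fineK f1) -(fineK f2) -(fineK f3).
  rewrite -EFinB -!EFinD !lee_fin PhiN /r => ? ? ? ?; lra.
have mT : forall n, measurable [set w | theta \in
        T_hat dZ dPhi K tau b (fun i => (z * Se_hat n i w / Num.sqrt (n%:R))%R)
              (\row_i betay_hat n i w)%R betaPhi].
  move=> n.
  pose E i l := [set w | (`|betay_hat n i w - (theta *m betaPhi) ord0 i|%:E <=
     tau_ext K tau l + (z * Se_hat n i w / Num.sqrt n%:R)%:E)%E].
  have mE : forall i l, measurable (E i l).
    move=> i l; rewrite /E /tau_ext; case: ifP => _.
      have -> : [set w | (`|betay_hat n i w - (theta *m betaPhi) ord0 i|%:E <=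
         (tau l)%:E + (z * Se_hat n i w / Num.sqrt n%:R)%:E)%E] =
         [set w | `|betay_hat n i w - (theta *m betaPhi) ord0 i| <=
         tau l + z * Se_hat n i w / Num.sqrt n%:R].
        by apply/seteqP; split => w /=;
          rewrite (_ : ((tau l)%:E + (z * Se_hat n i w / Num.sqrt n%:R)%:E)%E =
          (tau l + z * Se_hat n i w / Num.sqrt n%:R)%:E) // lee_fin.
      apply: meas_le.
        by apply: measurableT_comp => //; apply: measurable_funB.
      by apply: measurable_funD => //; apply: measurable_funM => //; apply: measurable_funM.
    have -> : [set w | (`|betay_hat n i w - (theta *m betaPhi) ord0 i|%:E <=
         +oo + (z * Se_hat n i w / Num.sqrt n%:R)%:E)%E] = setT.
      by apply/seteqP; split => w //= _; rewrite addye // leey.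
    exact: measurableT.
  have -> : [set w | theta \in
        T_hat dZ dPhi K tau b (fun i => (z * Se_hat n i w / Num.sqrt (n%:R))%R)
              (\row_i betay_hat n i w)%R betaPhi] =
    \bigcup_(u in [set u : {ffun 'I_dZ -> 'I_K.+2} |
         max_assignments dZ K b (fun i => nat_of_ord (u i))])
      \bigcap_(i in setT) E i (u i).
    apply/seteqP; split => w /=.
      move=> /set_mem /set_mem [U hU hUw].
      pose u : {ffun 'I_dZ -> 'I_K.+2} := [ffun i => inord (U i)].
      have eU : (fun i => nat_of_ord (u i)) = U.
        apply/funext => i; rewrite /u ffunE inordK // ltnS.
        by case: hU => /(_ i) /andP[_ ->].
      exists u; first by rewrite /= eU.
      move=> i _; rewrite /E /= -[nat_of_ord (u i)]/((fun i => nat_of_ord (u i)) i) eU.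
      by have := hUw i; rewrite !mxE.
    move=> [u hu hw]; apply: mem_set; apply: mem_set.
    exists (fun i => nat_of_ord (u i)) => // i.
    by have := hw i I; rewrite /E /= !mxE.
  apply: fin_bigcup_measurable; first exact: finite_finset.
  move=> u _; apply: fin_bigcap_measurable; first exact: finite_finset.
  by move=> i _; exact: mE.
have sub : forall n, \bigcap_i A n i `<=` [set w | theta \in
        T_hat dZ dPhi K tau b (fun i => (z * Se_hat n i w / Num.sqrt (n%:R))%R)
              (\row_i betay_hat n i w)%R betaPhi].
  move=> n w hw /=; apply: mem_set; apply: mem_set.
  exists U0 => //= i.
  have := hU0b i; have := hw i I; rewrite /A /= !mxE.
  set gi := betay ord0 i - _.
  move=> he; rewrite /tau_ext; case: ifP => _; last first.
    by move=> _; rewrite addye // leey.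
  rewrite lee_fin => hg.
  rewrite (_ : ((tau (U0 i))%:E + (z * Se_hat n i w / Num.sqrt n%:R)%:E)%E =
     (tau (U0 i) + z * Se_hat n i w / Num.sqrt n%:R)%:E) // lee_fin.
  rewrite (_ : betay_hat n i w - _ = gi + (betay_hat n i w - betay ord0 i)); last first.
    by rewrite /gi; ring.
  apply: le_trans (ler_normD _ _) _; lra.
have hall := @filter_forall nat _ (fun i n => (P (~` A n i) <= r%:E)%E) \oo _ key.
near=> n.
have hn : forall i, (P (~` A n i) <= r%:E)%E by near: n; exact: hall.
have h1 := inter_lb P dZ (A n) r (mA n) hn.
apply: le_trans (le_trans h1 _).
  rewrite lee_fin /r /c /del.
  have -> : mR * (2 * (alpha / (2 * mR)) + 5 * (eps / (8 * mR))) = alpha + 5 / 8 * eps.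
    by field; rewrite gt_eqF.
  lra.
apply: le_measure; rewrite ?inE //.
by apply: fin_bigcap_measurable => //; exact: finite_finset.
Unshelve. all: end_near.
Qed.
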